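(* Let $d\ge 1$ and $\ell\ge 3$ be integers. The number of arcs of the cyclic Kautz digraph $CK(d,\ell)$ is $$(d+1)d^{\ell}-(2d-1)\big((-1)^{\ell-1}d+d^{\ell-1}\big).$$
   Context: Let $\Sigma=\{0,1,\dots,d\}$ be an alphabet of $d+1$ symbols. The cyclic Kautz digraph $CK(d,\ell)$ has as vertices all sequences $a_1a_2\ldots a_\ell\in\Sigma^\ell$ with $a_i\neq a_{i+1}$ for $1\le i\le \ell-1$ and $a_1\neq a_\ell$. There is an arc from $a_1\ldots a_\ell$ to $b_1\ldots b_\ell$ if and only if both are vertices and $b_i=a_{i+1}$ for $1\le i\le \ell-1$. *)

(* Defs.v *)
From HB Require Import structures.
From mathcomp Require Import all_boot all_order all_algebra.
Set Implicit Arguments. Unset Strict Implicit. Unset Printing Implicit Defensive.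

(* Alphabet Sigma = {0,...,d} is 'I_d.+1; a word a_1...a_l is an l.-tuple,
   with a_{i+1} stored at index i (0-based). *)

Definition ck_vertex (d l : nat) (a : l.-tuple 'I_d.+1) : bool :=
  [forall i : 'I_l, forall j : 'I_l, (val j == (val i).+1) ==> (tnth a i != tnth a j)]
  && [forall i : 'I_l, forall j : 'I_l,
        ((val i == 0) && (val j == l.-1)) ==> (tnth a i != tnth a j)].

Definition ck_arc (d l : nat) (a b : l.-tuple 'I_d.+1) : bool :=
  [&& ck_vertex a, ck_vertex b &
      [forall i : 'I_l, forall j : 'I_l, (val j == (val i).+1) ==> (tnth b i == tnth a j)]].

Definition ck_arcs (d l : nat) : {set (l.-tuple 'I_d.+1 * l.-tuple 'I_d.+1)} :=
  [set p | ck_arc p.1 p.2].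

(* Main.v *)
Require Import Defs.
From mathcomp Require Import all_boot all_order all_algebra.
From mathcomp Require Import ring.
Import GRing.Theory.
Local Open Scope ring_scope.

Section Words.
Variable d : nat.
Local Notation T := 'I_d.+1.

Fixpoint allw (n : nat) : seq (seq T) :=
  match n with 0 => [:: [::]] | n'.+1 => [seq x :: s | x <- enum T, s <- allw n'] end.

Lemma mem_allw n s : (s \in allw n) = (size s == n).
Proof.
elim: n s => [|n IH] s /=; first by case: s.
apply/allpairsP/idP => [[[x s'] [_ Hs ->]]|]; first by rewrite /= eqSS -IH.
case: s => [|x s'] //= H; exists (x, s'); by rewrite mem_enum IH.
Qed.

Lemma uniq_allw n : uniq (allw n).
Proof.
elim: n => [|n IH] //=; apply: allpairs_uniq => //; first exact: enum_uniq.
by move=> [x s] [y t] _ _ /= [-> ->].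
Qed.

Lemma sum_allwS n (G : seq T -> int) :
  \sum_(s <- allw n.+1) G s = \sum_(x : T) \sum_(s <- allw n) G (x :: s).
Proof. by rewrite /= big_allpairs_dep big_enum. Qed.

Lemma sum_allw_rcons n (G : seq T -> int) :
  \sum_(s <- allw n.+1) G s = \sum_(s <- allw n) \sum_(z : T) G (rcons s z).
Proof.
elim: n G => [|n IH] G.
  by rewrite sum_allwS big_seq1; apply: eq_bigr => x _; rewrite big_seq1.
rewrite sum_allwS sum_allwS; apply: eq_bigr => x _.
by rewrite (IH (fun s => G (x :: s))).
Qed.

Lemma sum_allw_tuple n (G : seq T -> int) :
  \sum_(s <- allw n) G s = \sum_(t : n.-tuple T) G t.
Proof.
have P : perm_eq (allw n) (map val (enum {: n.-tuple T})).
  apply: uniq_perm; first exact: uniq_allw.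
    by rewrite map_inj_uniq ?enum_uniq //; exact: val_inj.
  move=> s; rewrite mem_allw; apply/idP/mapP => [/eqP H|[t _ ->]]; last by rewrite size_tuple.
  by exists (Tuple (introT eqP H)); rewrite ?mem_enum.
by rewrite (perm_big _ P) big_map big_enum.
Qed.

Definition ind (b : bool) : int := (b : nat)%:Z.

Definition C n (x y : T) : int :=
  \sum_(s <- allw n) ind (path (fun a b : T => a != b) x s && (last x s == y)).

Lemma C_S n x y : C n.+1 x y = \sum_(z : T) ind (x != z) * C n z y.
Proof.
rewrite /C sum_allwS; apply: eq_bigr => z _; rewrite big_distrr /=.
apply: eq_bigr => s _; rewrite /ind; by case: (x != z); rewrite ?mul1r ?mul0r.
Qed.

Lemma sum_neq (x : T) (g : T -> int) :
  \sum_(z : T) ind (x != z) * g z = \sum_z g z - g x.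
Proof.
rewrite (bigD1 x) //= eqxx mul0r add0r [in RHS](bigD1 x) //= [RHS]addrAC subrr add0r.
by apply: eq_bigr => z Hz; rewrite eq_sym Hz mul1r.
Qed.

Lemma sum_ind_eq (x : T) (g : T -> int) :
  \sum_(z : T) ind (x == z) * g z = g x.
Proof.
rewrite (bigD1 x) //= eqxx mul1r big1 ?addr0 // => z Hz.
by rewrite eq_sym (negPf Hz) mul0r.
Qed.

Lemma sum_const_T (c : int) : \sum_(z : T) c = c * d.+1%:Z.
Proof. by rewrite sumr_const card_ord -mulr_natr natz. Qed.

Lemma sum_neq1 (x : T) : \sum_(z : T) ind (x != z) = d%:Z.
Proof.
transitivity (\sum_(z : T) ind (x != z) * 1); first by apply: eq_bigr => z _; rewrite mulr1.
rewrite (sum_neq x (fun _ => 1)) sum_const_T mul1r. by rewrite -addn1 PoszD addrK.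
Qed.

Lemma C_val n x y : (d.+1)%:Z * C n x y =
  (d%:Z) ^+ n + (if x == y then d%:Z else -1) * (-1) ^+ n.
Proof.
elim: n x y => [|n IH] x y.
  rewrite /C big_seq1 /= /ind expr0 expr0 mulr1.
  have -> : (d.+1)%:Z = d%:Z + 1 by rewrite -addn1 PoszD.
  by case: (x == y) => /=; ring.
rewrite C_S mulr_sumr.
under eq_bigr do rewrite mulrCA IH mulrDr.
rewrite big_split /= -mulr_suml sum_neq1.
under eq_bigr do rewrite mulrA.
rewrite -mulr_suml sum_neq.
have -> : \sum_(z : T) (if z == y then d%:Z else -1) = 0.
  rewrite (bigD1 y) //= eqxx.
  rewrite (eq_bigr (fun _ => -1)) => [|z /negPf -> //].
  rewrite sumr_const cardC1 card_ord /= -[(-1) *+ d]mulr_natr mulN1r.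
  by rewrite natz subrr.
rewrite add0r.
rewrite [X in _ = _ + _ * X]exprS.
by rewrite exprS mulN1r mulrN mulNr.
Qed.


Lemma ind_and a b : ind (a && b) = ind a * ind b.
Proof. by case: a; case: b; rewrite /ind /= ?mul0r ?mul1r. Qed.

Lemma sum2 (a b : T) :
  \sum_(z : T) ind ((a != z) && (b != z)) = d%:Z - 1 + ind (a == b).
Proof.
under eq_bigr do rewrite ind_and.
rewrite (sum_neq a (fun z => ind (b != z))) sum_neq1 eq_sym.
by case: (a == b); rewrite /ind /= ?subr0 ?addr0 // subrK.
Qed.

Lemma sum_last n (y : T) (h : T -> int) :
  \sum_(r <- allw n) ind (path (fun a b : T => a != b) y r) * h (last y r)
  = \sum_(v : T) C n y v * h v.
Proof.
rewrite /C; under [RHS]eq_bigr do rewrite mulr_suml.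
rewrite exchange_big /=; apply: eq_bigr => r _.
rewrite -(sum_ind_eq (last y r) h) mulr_sumr; apply: eq_bigr => v _.
by rewrite ind_and mulrA.
Qed.

Variable m : nat.
Local Notation ne := (fun a b : T => a != b).

Definition R' (s : seq T) : bool :=
  [forall i : 'I_(m.+3), nth ord0 s i != nth ord0 s i.+1]
  && (nth ord0 s 0 != nth ord0 s m.+2) && (nth ord0 s 1 != nth ord0 s m.+3).

Lemma R_rcons x y r z : size r = m.+1 ->
  R' (rcons (x :: y :: r) z) =
  [&& x != y, path ne y r, last y r != z, x != last y r & y != z].
Proof.
move=> Hr; rewrite /R'.
have -> : [forall i : 'I_(m.+3), nth ord0 (rcons (x :: y :: r) z) i !=
            nth ord0 (rcons (x :: y :: r) z) i.+1] = path ne x (y :: rcons r z).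
  apply/forallP/(pathP ord0) => [H i Hi|H i].
    have Hi' : (i < m.+3)%N by rewrite /= size_rcons Hr in Hi.
    exact: (H (Ordinal Hi')).
  by apply: H; rewrite /= size_rcons Hr.
rewrite /= rcons_path.
have E1 : nth ord0 (rcons r z) m = last y r.
  rewrite nth_rcons Hr ltnSn.
  case: r Hr => [//|r0 r'] Hr.
  have := nth_last ord0 (r0 :: r'); by rewrite Hr.
have E2 : nth ord0 (rcons r z) m.+1 = z.
  by rewrite nth_rcons Hr ltnn eqxx.
rewrite E1 E2.
by case: (x != y); case: (path ne y r); case: (last y r != z);
   case: (x != last y r); case: (y != z).
Qed.

Definition S := \sum_(s <- allw m.+4) ind (R' s).

Lemma S_step1 : S = \sum_(y : T) \sum_(v : T) C m.+1 y v * (d%:Z - 1 + ind (v == y)) ^+ 2.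
Proof.
rewrite /S sum_allw_rcons sum_allwS.
transitivity (\sum_(x : T) \sum_(y : T) ind (x != y) * \sum_(v : T) C m.+1 y v *
   (ind (x != v) * (d%:Z - 1 + ind (v == y)))).
  apply: eq_bigr => x _; rewrite sum_allwS; apply: eq_bigr => y _.
  rewrite -sum_last mulr_sumr big_seq [RHS]big_seq; apply: eq_bigr => r.
  rewrite mem_allw => /eqP Hr.
  under eq_bigr do rewrite R_rcons //.
  case: (x != y); last by rewrite mul0r big1.
  case: (path ne y r); last by rewrite mul0r mulr0 big1.
  case: (x != last y r); last by rewrite mul0r !mulr0 big1 // => z _; rewrite andbF.
  rewrite /= -sum2 !mul1r; apply: eq_bigr => z _; by rewrite eq_sym.
rewrite (eq_bigr (fun x => \sum_(y : T) \sum_(v : T) ind (x != y) * (C m.+1 y v *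
   (ind (x != v) * (d%:Z - 1 + ind (v == y)))))); last first.
  by move=> x _; apply: eq_bigr => y _; rewrite mulr_sumr.
rewrite exchange_big /=; apply: eq_bigr => y _.
rewrite exchange_big /=; apply: eq_bigr => v _.
transitivity (\sum_(x : T) (C m.+1 y v * (d%:Z - 1 + ind (v == y))) * ind ((y != x) && (v != x))).
  apply: eq_bigr => x _; rewrite ind_and (eq_sym y x) (eq_sym v x); ring.
by rewrite -mulr_sumr sum2 (eq_sym y v) expr2 mulrA.
Qed.

Lemma S_val : S = (d%:Z) ^+ 2 * ((d%:Z) ^+ m.+1 + d%:Z * (-1) ^+ m.+1)
   + d%:Z * ((d%:Z - 1) ^+ 2 * ((d%:Z) ^+ m.+1 - (-1) ^+ m.+1)).
Proof.
apply: (@mulfI _ (d.+1)%:Z) => //.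
rewrite S_step1 mulr_sumr.
transitivity (\sum_(y : T) ((d%:Z) ^+ 2 * ((d%:Z) ^+ m.+1 + d%:Z * (-1) ^+ m.+1)
   + d%:Z * ((d%:Z - 1) ^+ 2 * ((d%:Z) ^+ m.+1 - (-1) ^+ m.+1)))); last first.
  by rewrite sum_const_T mulrC.
apply: eq_bigr => y _; rewrite mulr_sumr (bigD1 y) //=. rewrite (mulrA (d.+1)%:Z) C_val eqxx /ind /=.
rewrite (eq_bigr (fun _ => (d%:Z - 1) ^+ 2 * ((d%:Z) ^+ m.+1 - (-1) ^+ m.+1))).
  rewrite sumr_const cardC1 card_ord /= -mulr_natl natz; ring.
move=> v Hv; rewrite (mulrA (d.+1)%:Z) C_val eq_sym (negPf Hv) /ind /=; ring.
Qed.


Definition tA (w : (m.+4).-tuple T) : (m.+3).-tuple T :=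
  [tuple tnth w (widen_ord (leqnSn _) i) | i < m.+3].
Definition tB (w : (m.+4).-tuple T) : (m.+3).-tuple T :=
  [tuple tnth w (lift ord0 i) | i < m.+3].

Lemma tA_nth w i : tnth (tA w) i = nth ord0 w i.
Proof. by rewrite tnth_mktuple (tnth_nth ord0). Qed.
Lemma tB_nth w i : tnth (tB w) i = nth ord0 w i.+1.
Proof. by rewrite tnth_mktuple (tnth_nth ord0) lift0. Qed.

Lemma hAB_inj : injective (fun w => (tA w, tB w)).
Proof.
move=> w1 w2 H.
have HA : tA w1 = tA w2 := congr1 fst H.
have HB : tB w1 = tB w2 := congr1 snd H.
apply: eq_from_tnth => k.
case: (unliftP ord0 k) => [j ->|->].
  by have := congr1 (fun t => tnth t j) HB; rewrite !tnth_mktuple.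
have := congr1 (fun t => tnth t ord0) HA; rewrite !tnth_mktuple.
have -> // : widen_ord (leqnSn m.+3) ord0 = ord0 by apply: val_inj.
Qed.

Lemma arcR w : ck_arc (tA w) (tB w) = R' w.
Proof.
rewrite /ck_arc /ck_vertex /R'.
apply/idP/idP.
  case/and3P => /andP[/forallP VA1 /forallP VA2] /andP[/forallP VB1 /forallP VB2] _.
  apply/andP; split; first (apply/andP; split).
  - apply/forallP => i; case: i => [[|k] Hk].
      have := VA1 ord0 => /forallP/(_ (Ordinal (isT : (1 < m.+3)%N))).
      by rewrite /= !tA_nth.
    have Hk' : (k < m.+3)%N by apply: ltnW.
    have := VB1 (Ordinal Hk') => /forallP/(_ (Ordinal Hk)).
    by rewrite /= eqxx !tB_nth.
  - have := VA2 ord0 => /forallP/(_ ord_max).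
    by rewrite /= eqxx !tA_nth.
  - have := VB2 ord0 => /forallP/(_ ord_max).
    by rewrite /= eqxx !tB_nth.
case/andP => /andP[/forallP H1 H2] H3.
apply/and3P; split.
- apply/andP; split.
    apply/forallP => i; apply/forallP => j; apply/implyP => /eqP Hj.
    by rewrite !tA_nth Hj; exact: H1.
  apply/forallP => i; apply/forallP => j; apply/implyP => /andP[/eqP Hi /eqP Hj].
  by rewrite !tA_nth Hi Hj.
- apply/andP; split.
    apply/forallP => i; apply/forallP => j; apply/implyP => /eqP Hj.
    by rewrite !tB_nth Hj; have := H1 j; rewrite Hj.
  apply/forallP => i; apply/forallP => j; apply/implyP => /andP[/eqP Hi /eqP Hj].
  by rewrite !tB_nth Hi Hj.
- apply/forallP => i; apply/forallP => j; apply/implyP => /eqP Hj.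
  by rewrite tA_nth tB_nth Hj.
Qed.


Lemma arcs_img : ck_arcs d m.+3 = (fun w => (tA w, tB w)) @: [set w : (m.+4).-tuple T | R' w].
Proof.
apply/setP => [[a b]]; rewrite inE /=; apply/idP/imsetP => [H|[w Hw E]]; last first.
  by case: E => -> ->; rewrite inE -arcR in Hw.
have Sh := H; case/and3P: Sh => _ _ /forallP Sh.
pose w := [tuple (if unlift ord0 k is Some j then tnth b j else tnth a ord0) | k < m.+4].
have EB : tB w = b.
  by apply: eq_from_tnth => j; rewrite !tnth_mktuple liftK.
have EA : tA w = a.
  apply: eq_from_tnth => i; rewrite !tnth_mktuple.
  case: (unliftP ord0 (widen_ord (leqnSn m.+3) i)) => [j Hj|Hj].
    have Hv : val i = (val j).+1 by have := congr1 val Hj.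

    by have := Sh j => /forallP/(_ i); rewrite Hv eqxx /= => /eqP.
  congr tnth; apply: val_inj; by have := congr1 val Hj.
exists w; last by rewrite EA EB.
by rewrite inE -arcR EA EB.
Qed.

Lemma card_S : (#|ck_arcs d m.+3|%:Z : int) = S.
Proof.
rewrite arcs_img (card_imset _ hAB_inj) /S sum_allw_tuple.
rewrite -sum1_card big_mkcond /= -natz natr_sum; apply: eq_bigr => w _.
by rewrite inE /ind; case: (R' w).
Qed.

End Words.

Theorem proposition2 (d l : nat) (hd : (1 <= d)%N) (hl : (3 <= l)%N) :
  (#|ck_arcs d l|%:Z : int) =
  (d.+1)%:Z * (d%:Z) ^+ l
  - (2 * d%:Z - 1) * ((-1) ^+ l.-1 * d%:Z + (d%:Z) ^+ l.-1).
Proof.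
case: l hl => [|[|[|m]]] // _.
rewrite card_S S_val /=.
have -> : (d.+1)%:Z = d%:Z + 1 by rewrite -addn1 PoszD.
rewrite !exprS; ring.
Qed.
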